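(* Let $(X,\sigma)$ be a Toeplitz subshift with period structure $(p_n)$. Then $\operatorname{Aut}^{(\infty)}(X,\sigma)$ is the direct limit of the sequence $$\operatorname{Aut}(X,\sigma)\hookrightarrow\operatorname{Aut}(X,\sigma^{p_1})\hookrightarrow\operatorname{Aut}(X,\sigma^{p_2})\hookrightarrow\operatorname{Aut}(X,\sigma^{p_3})\hookrightarrow\cdots$$ where the maps are the natural inclusions; equivalently $\operatorname{Aut}^{(\infty)}(X,\sigma)=\operatorname{Aut}(X,\sigma)\cup\bigcup_{n\ge1}\operatorname{Aut}(X,\sigma^{p_n})$ inside $\operatorname{Homeo}(X)$.
   Context: Let $\mathcal{A}$ be a finite alphabet and $\sigma$ the left shift on $\mathcal{A}^{\mathbb{Z}}$. A Toeplitz sequence $u$ is one such that for every $n\in\mathbb{Z}$ there is $m\ge1$ with $u_n=u_{n+km}$ for all $k$; it is assumed non-periodic. With $\operatorname{per}_p(u)=\{k: u_k=u_{k+pm}\ \forall m\}$, a period structure is a sequence $(p_n)$ with $p_n\mid p_{n+1}$, $\bigcup_n\operatorname{per}_{p_n}(u)=\mathbb{Z}$, each $p_n$ essential. The Toeplitz subshift $(X,\sigma)$ is the orbit closure of $u$ with the shift. $\operatorname{Aut}(X,T)$ is the group of homeomorphisms commuting with $T$ and $\operatorname{Aut}^{(\infty)}(X,T)=\bigcup_{n\ge1}\operatorname{Aut}(X,T^n)\subseteq\operatorname{Homeo}(X)$. *)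

(* Defs.v *)
From mathcomp Require Import all_boot.
From Stdlib Require Import ZArith.

Set Implicit Arguments.
Unset Strict Implicit.

Open Scope Z_scope.

Definition seqZ (A : finType) := Z -> A.

Definition shiftn (A : finType) (n : Z) (x : seqZ A) : seqZ A := fun i => x (i + n).

Definition toeplitz (A : finType) (u : seqZ A) : Prop :=
  forall n : Z, exists m : Z, 1 <= m /\ forall k : Z, u n = u (n + k * m).

Definition periodic (A : finType) (u : seqZ A) : Prop :=
  exists p : Z, 1 <= p /\ forall n : Z, u (n + p) = u n.

Definition per (A : finType) (u : seqZ A) (p : Z) (k : Z) : Prop :=
  forall m : Z, u k = u (k + p * m).

(* p is an essential period: per_p(u) is nonempty and the p-skeleton of u
   is not periodic with any smaller period 0 < q < p. *)
Definition essential (A : finType) (u : seqZ A) (p : Z) : Prop :=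
  1 <= p /\ (exists k, per u p k) /\
  forall q : Z, 1 <= q < p ->
    ~ (forall k : Z, (per u p k <-> per u p (k + q)) /\
                     (per u p k -> u k = u (k + q))).

(* Period structure (p_1, p_2, ...) represented as p : nat -> Z, p 0 = p_1. *)
Definition period_structure (A : finType) (u : seqZ A) (p : nat -> Z) : Prop :=
  (forall n, (p n | p (S n))) /\
  (forall k : Z, exists n, per u (p n) k) /\
  (forall n, essential u (p n)).

(* Orbit closure of u under the shift, for the product topology on A^Z
   (A discrete): x is in it iff every central window of x occurs in u,
   i.e. every cylinder neighbourhood of x meets the orbit of u. *)
Definition in_orbit_closure (A : finType) (u : seqZ A) (x : seqZ A) : Prop :=
  forall N : Z, exists k : Z, forall i : Z, -N <= i <= N -> x i = shiftn k u i.

Definition subshift (A : finType) (u : seqZ A) : Type := { x : seqZ A | in_orbit_closure u x }.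

Definition continuousX (A : finType) (u : seqZ A) (f : subshift u -> subshift u) : Prop :=
  forall (x : subshift u) (N : Z), exists M : Z, forall y : subshift u,
    (forall i, -M <= i <= M -> proj1_sig y i = proj1_sig x i) ->
    forall i, -N <= i <= N -> proj1_sig (f y) i = proj1_sig (f x) i.

(* f commutes with sigma^n on X (X is shift invariant, so this says
   f o sigma^n = sigma^n o f on X). *)
Definition commutes_pow (A : finType) (u : seqZ A) (f : subshift u -> subshift u) (n : Z) : Prop :=
  forall x y : subshift u, proj1_sig y = shiftn n (proj1_sig x) ->
    proj1_sig (f y) = shiftn n (proj1_sig (f x)).

Definition homeoX (A : finType) (u : seqZ A) (f g : subshift u -> subshift u) : Prop :=
  (forall x, g (f x) = x) /\ (forall x, f (g x) = x) /\ continuousX f /\ continuousX g.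

Definition in_Aut (A : finType) (u : seqZ A) (f : subshift u -> subshift u) (n : Z) : Prop :=
  (exists g, homeoX f g) /\ commutes_pow f n.

Definition in_Aut_infty (A : finType) (u : seqZ A) (f : subshift u -> subshift u) : Prop :=
  exists n : Z, 1 <= n /\ in_Aut f n.

(* Main.v *)
Require Import Defs.
From mathcomp Require Import all_boot.
From Stdlib Require Import ZArith Lia Classical FunctionalExtensionality ProofIrrelevance.
Open Scope Z_scope.
Set Implicit Arguments.
Unset Strict Implicit.

Lemma per_mult (A : finType) (v : seqZ A) a b k : per v a k -> (a | b) -> per v b k.
Proof. intros H [c Hc] m. subst b.
  transitivity (v (k + a*(c*m))); [apply H | f_equal; ring]. Qed.

Lemma pdiv_mono (p : nat -> Z) : (forall n, (p n | p (S n))) ->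
  forall n n', le n n' -> (p n | p n').
Proof. intros Hd n n' H. induction H. apply Z.divide_refl. eapply Z.divide_trans; eauto. Qed.

Lemma per_mono (A : finType) (u : seqZ A) (p : nat -> Z) : (forall n, (p n | p (S n))) ->
  forall n n' k, per u (p n) k -> le n n' -> per u (p n') k.
Proof. intros Hd n n' k H Hle. eapply per_mult; [exact H| apply pdiv_mono; auto]. Qed.

Lemma window_per (A : finType) (u : seqZ A) (p : nat -> Z) : (forall n, (p n | p (S n))) ->
  (forall k, exists n, per u (p n) k) ->
  forall (W : nat) j, exists M, forall w, -Z.of_nat W <= w <= Z.of_nat W -> per u (p M) (j + w).
Proof.
  intros Hd Hcov W j. induction W as [|W IH].
  - destruct (Hcov j) as [n Hn]. exists n. intros w Hw.
    replace (j + w) with j by lia. exact Hn.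
  - destruct IH as [M HM].
    destruct (Hcov (j + Z.of_nat (S W))) as [M1 HM1].
    destruct (Hcov (j - Z.of_nat (S W))) as [M2 HM2].
    exists (Nat.max M (Nat.max M1 M2)). intros w Hw.
    destruct (Z.eq_dec w (Z.of_nat (S W))) as [e|ne].
    { subst w. eapply per_mono; [exact Hd| exact HM1| lia]. }
    destruct (Z.eq_dec w (- Z.of_nat (S W))) as [e|ne'].
    { subst w. apply (per_mono Hd (n:=M2)); [| lia].
      replace (j + - Z.of_nat (S W)) with (j - Z.of_nat (S W)) by lia. exact HM2. }
    apply (per_mono Hd (n:=M)); [apply HM; lia | lia].
Qed.

Lemma window_perZ (A : finType) (u : seqZ A) (p : nat -> Z) : (forall n, (p n | p (S n))) ->
  (forall k, exists n, per u (p n) k) ->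
  forall W j, exists M, forall w, -W <= w <= W -> per u (p M) (j + w).
Proof.
  intros Hd Hcov W j. destruct (window_per Hd Hcov (Z.to_nat W) j) as [M HM].
  exists M. intros w Hw. apply HM. lia.
Qed.

Lemma gcd_stab (p : nat -> Z) : (forall n, (p n | p (S n))) -> (forall n, 1 <= p n) ->
  forall K, 1 <= K -> exists M0, forall M, le M0 M -> Z.gcd K (p M) = Z.gcd K (p M0).
Proof.
  intros Hd Hp K HK.
  assert (Hb : forall M, 1 <= Z.gcd K (p M) <= K).
  { intro M. pose proof (Z.gcd_nonneg K (p M)).
    assert (Z.gcd K (p M) <> 0) by (intro E; apply Z.gcd_eq_0_l in E; lia).
    split; [lia|]. apply Z.divide_pos_le; [lia| apply Z.gcd_divide_l]. }
  assert (Hm : forall M M', le M M' -> (Z.gcd K (p M) | Z.gcd K (p M'))).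
  { intros M M' H. apply Z.gcd_greatest; [apply Z.gcd_divide_l|].
    eapply Z.divide_trans; [apply Z.gcd_divide_r| apply pdiv_mono; auto]. }
  assert (Main : forall n : nat, forall M0, (Z.to_nat (K - Z.gcd K (p M0)) <= n)%coq_nat ->
     exists M1, forall M, le M1 M -> Z.gcd K (p M) = Z.gcd K (p M1)).
  { induction n as [|n IH]; intros M0 Hn;
    (destruct (classic (exists M, le M0 M /\ Z.gcd K (p M) <> Z.gcd K (p M0))) as [[M [HM1 HM2]]|Hno];
     [ | exists M0; intros M HM; apply NNPP; intro E; apply Hno; exists M; auto]);
    pose proof (Hm _ _ HM1) as Hdv; pose proof (Hb M); pose proof (Hb M0);
    assert (Z.gcd K (p M0) <= Z.gcd K (p M)) by (apply Z.divide_pos_le; [lia|exact Hdv]).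
    - lia.
    - apply (IH M). lia. }
  exact (Main _ 0%nat (le_n _)).
Qed.

Lemma bezout_mod K P c : 1 <= P -> (Z.gcd K P | c) -> exists s t, 0 <= s < P /\ s * K = c + t * P.
Proof.
  intros HP [e He]. destruct (Z.gcd_bezout K P _ (erefl _)) as [a [b Hab]].
  set s0 := a * e.
  pose proof (Z.div_mod s0 P ltac:(lia)) as Hdm.
  pose proof (Z.mod_pos_bound s0 P ltac:(lia)).
  exists (s0 mod P), (- b * e - (s0 / P) * K). split; [lia|].
  assert (s0 * K = c - b * e * P) as E.
  { subst c s0. rewrite -Hab. ring. }
  assert (s0 mod P = s0 - P * (s0 / P)) as E2 by lia.
  rewrite E2. rewrite Z.mul_sub_distr_r E. ring.
Qed.

Lemma residue (A : finType) (u x : seqZ A) g : 1 <= g -> in_orbit_closure u x ->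
  exists rho, forall W, exists k, k mod g = rho /\
    forall i, -W <= i <= W -> x i = shiftn k u i.
Proof.
  intros Hg Hx.
  set ag := fun W k => forall i, -W <= i <= W -> x i = shiftn k u i.
  assert (Hmon : forall W W' k, W' <= W -> ag W k -> ag W' k).
  { intros W W' k HW H i Hi. apply H. lia. }
  apply NNPP; intro Hn.
  assert (Hb : forall rho, exists W, forall k, k mod g = rho -> ~ ag W k).
  { intros rho. apply NNPP; intro H2. apply Hn. exists rho. intro W.
    apply NNPP; intro H3. apply H2. exists W. intros k Hk Hag. apply H3. exists k. auto. }
  assert (Aux : forall n : nat, exists W, forall rho, 0 <= rho < Z.of_nat n ->
     forall k, k mod g = rho -> ~ ag W k).
  { induction n as [|n IH].
    - exists 0. intros. lia.
    - destruct IH as [W0 HW0]. destruct (Hb (Z.of_nat n)) as [W1 HW1].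
      exists (Z.max W0 W1). intros rho Hr k Hk Hag.
      destruct (Z.eq_dec rho (Z.of_nat n)) as [e|ne].
      + rewrite e in Hk. apply (HW1 k Hk). apply (Hmon (Z.max W0 W1)); [lia|exact Hag].
      + apply (HW0 rho ltac:(lia) k Hk). apply (Hmon (Z.max W0 W1)); [lia|exact Hag]. }
  destruct (Aux (Z.to_nat g)) as [W HW].
  destruct (Hx W) as [k Hk].
  pose proof (Z.mod_pos_bound k g ltac:(lia)).
  apply (HW (k mod g) ltac:(lia) k (erefl _)). exact Hk.
Qed.

Lemma per_lift (A : finType) (u : seqZ A) (p : nat -> Z) :
  (forall n, (p n | p (S n))) -> (forall n, 1 <= p n) ->
  (forall k, exists n, per u (p n) k) ->
  forall (x : seqZ A) K i, in_orbit_closure u x -> 1 <= K -> per x K i ->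
  exists M, per x (p M) i.
Proof.
  intros Hd Hp Hcov x K i Hx HK Hper.
  destruct (gcd_stab Hd Hp HK) as [M0 HM0].
  set g := Z.gcd K (p M0).
  assert (Hg : 1 <= g).
  { pose proof (Z.gcd_nonneg K (p M0)).
    assert (g <> 0) by (intro E; apply Z.gcd_eq_0_l in E; lia). lia. }
  exists M0. apply per_mult with g; [| apply Z.gcd_divide_r].
  intro r.
  destruct (residue Hg Hx) as [rho Hrho].
  set z0 := i + g * r.
  destruct (Hrho (Z.abs z0)) as [k [Hk Hag]].
  assert (Hx0 : x z0 = u (z0 + k)) by (apply Hag; lia).
  destruct (Hcov (z0 + k)) as [M' HM'].
  assert (HM'' : per u (p (Nat.max M' M0)) (z0 + k)) by (apply (per_mono Hd HM'); lia).
  set P := p (Nat.max M' M0).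
  assert (Hgc : Z.gcd K P = g) by (apply HM0; lia).
  pose proof (Hp (Nat.max M' M0)) as HP.
  destruct (Hrho (Z.abs i + P * K)) as [k' [Hk' Hag']].
  assert (Hdv : (Z.gcd K P | g * r + k - k')).
  { rewrite Hgc. pose proof (Z.div_mod k g ltac:(lia)). pose proof (Z.div_mod k' g ltac:(lia)).
    exists (r + k / g - k' / g).
    assert (k - k' = g * (k / g) - g * (k' / g)) as E by lia.
    replace (g * r + k - k') with (g * r + (k - k')) by ring. rewrite E. ring. }
  destruct (bezout_mod HP Hdv) as [s [t [Hs Hst]]].
  transitivity (x (i + K * s)); [apply Hper|].
  transitivity (u (i + K * s + k')).
  { apply Hag'. nia. }
  transitivity (u (z0 + k + P * t)).
  { f_equal. unfold z0. lia. }
  rewrite Hx0. symmetry. apply HM''.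
Qed.

Lemma orbit_shift (A : finType) (u x : seqZ A) n : in_orbit_closure u x -> in_orbit_closure u (shiftn n x).
Proof.
  intros Hx N. destruct (Hx (Z.abs N + Z.abs n)) as [k Hk]. exists (n + k).
  intros i Hi. unfold shiftn. rewrite (Hk (i + n)); [|lia]. unfold shiftn. f_equal. ring.
Qed.

Lemma orbit_u (A : finType) (u : seqZ A) : in_orbit_closure u u.
Proof. intros N. exists 0. intros i _. unfold shiftn. f_equal. ring. Qed.

Definition su (A : finType) (u : seqZ A) (j : Z) : subshift u :=
  exist _ (shiftn j u) (orbit_shift j (orbit_u u)).

Lemma sub_eq (A : finType) (u : seqZ A) (x y : subshift u) : proj1_sig x = proj1_sig y -> x = y.
Proof. destruct x as [x hx], y as [y hy]. simpl. intro E. subst y. f_equal. apply proof_irrelevance. Qed.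

Lemma comm_nat (A : finType) (u : seqZ A) (f : subshift u -> subshift u) m : commutes_pow f m ->
  forall n : nat, commutes_pow f (m * Z.of_nat n).
Proof.
  intros Hc n. induction n as [|n IH].
  - intros x y Hy. assert (y = x) as E.
    { apply sub_eq. rewrite Hy. apply functional_extensionality. intro i. unfold shiftn. f_equal. lia. }
    subst y. apply functional_extensionality. intro i. unfold shiftn. f_equal. lia.
  - intros x y Hy.
    set z : subshift u := exist _ (shiftn (m * Z.of_nat n) (proj1_sig x)) (orbit_shift _ (proj2_sig x)).
    assert (Hz : proj1_sig (f z) = shiftn (m * Z.of_nat n) (proj1_sig (f x))) by (apply IH; reflexivity).
    assert (Hyz : proj1_sig y = shiftn m (proj1_sig z)).
    { rewrite Hy. apply functional_extensionality. intro i. simpl. unfold shiftn. f_equal. lia. }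
    rewrite (Hc z y Hyz) Hz. apply functional_extensionality. intro i. unfold shiftn. f_equal. lia.
Qed.

Lemma comm_neg (A : finType) (u : seqZ A) (f : subshift u -> subshift u) n : commutes_pow f n -> commutes_pow (u:=u) f (- n).
Proof.
  intros Hc x y Hy.
  assert (Hx : proj1_sig x = shiftn n (proj1_sig y)).
  { rewrite Hy. apply functional_extensionality. intro i. unfold shiftn. f_equal. lia. }
  rewrite (Hc y x Hx). apply functional_extensionality. intro i. unfold shiftn. f_equal. lia.
Qed.

Lemma comm_mult (A : finType) (u : seqZ A) (f : subshift u -> subshift u) m : commutes_pow f m ->
  forall q, commutes_pow (u:=u) f (m * q).
Proof.
  intros Hc q. destruct (Z.le_gt_cases 0 q) as [H|H].
  - replace q with (Z.of_nat (Z.to_nat q)) by lia. apply comm_nat; auto.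
  - replace (m * q) with (- (m * Z.of_nat (Z.to_nat (- q)))) by lia.
    apply comm_neg. apply comm_nat; auto.
Qed.

Lemma hard (A : finType) (u : seqZ A) (p : nat -> Z) :
  period_structure u p -> forall (f : subshift u -> subshift u) m, 1 <= m ->
  continuousX f -> commutes_pow f m -> exists n, commutes_pow f (p n).
Proof.
  intros [Hd [Hcov Hess]] f m Hm Hcont Hcm.
  assert (Hp : forall n, 1 <= p n) by (intro n; apply (Hess n)).
  destruct (gcd_stab Hd Hp Hm) as [N HN].
  exists N. set P := p N.
  assert (keyA : forall j i, proj1_sig (f (su u (j + P))) i = proj1_sig (f (su u j)) (i + P)).
  { intros j i. set x := proj1_sig (f (su u j)).
    destruct (Hcont (su u j) (Z.abs (i + P))) as [W' HW'].
    destruct (window_perZ Hd Hcov W' j) as [M HM].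
    assert (H1 : per x (m * p M) (i + P)).
    { intro t.
      assert (Hc' : proj1_sig (f (su u (j + m * p M * t))) = shiftn (m * (p M * t)) x).
      { apply (comm_mult Hcm (q:=p M * t)). simpl. apply functional_extensionality. intro w. unfold shiftn. f_equal. ring. }
      assert (Hag := HW' (su u (j + m * p M * t))).
      rewrite -/x in Hag.
      rewrite -Hag.
      - rewrite Hc'. unfold shiftn. f_equal. ring.
      - intros w Hw. simpl. unfold shiftn.
        transitivity (u (j + w + p M * (m * t))); [f_equal; ring|]. rewrite -(HM w Hw (m * t)). f_equal; ring.
      - lia. }
    pose proof (Hp M).
    destruct (per_lift Hd Hp Hcov (proj2_sig (f (su u j))) (K := m * p M) ltac:(nia) H1) as [M1 HM1].
    rewrite -/x in HM1.
    destruct (Hcont (su u (j + P)) (Z.abs i)) as [W HW].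
    destruct (window_perZ Hd Hcov W (j + P)) as [M2 HM2].
    set M3 := Nat.max (Nat.max M1 M2) N.
    assert (HQ : per x (p M3) (i + P)) by (apply (per_mono Hd HM1); lia).
    assert (Hgc : Z.gcd m (p M3) = Z.gcd m P) by (apply HN; lia).
    assert (Hdv : (Z.gcd m (p M3) | P)) by (rewrite Hgc; apply Z.gcd_divide_r).
    destruct (bezout_mod (Hp M3) Hdv) as [s [t [Hs Hst]]].
    assert (Hc' : proj1_sig (f (su u (j + m * s))) = shiftn (m * s) x).
    { apply (comm_mult Hcm (q:=s)). simpl. apply functional_extensionality. intro w. unfold shiftn. f_equal. ring. }
    assert (Hag := HW (su u (j + m * s))).
    rewrite -Hag.
    - rewrite Hc'. unfold shiftn. transitivity (x (i + P + p M3 * t)).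
      + f_equal. lia.
      + symmetry. apply HQ.
    - intros w Hw. simpl. unfold shiftn.
      assert (HM2' : per u (p M3) (j + P + w)) by (apply (per_mono Hd (HM2 w Hw)); lia).
      transitivity (u (j + P + w + p M3 * t)); [f_equal; lia|]. rewrite -(HM2' t). f_equal; ring.
    - lia. }
  intros x y Hy. apply functional_extensionality. intro i. unfold shiftn at 1.
  destruct (Hcont y (Z.abs i)) as [W1 HW1].
  destruct (Hcont x (Z.abs (i + P))) as [W2 HW2].
  destruct (proj2_sig x (Z.abs W1 + Z.abs P + Z.abs W2)) as [k Hk].
  assert (e1 : proj1_sig (f (su u k)) (i + P) = proj1_sig (f x) (i + P)).
  { apply HW2; [|lia]. intros w Hw. simpl. symmetry. apply Hk. lia. }
  assert (e2 : proj1_sig (f (su u (k + P))) i = proj1_sig (f y) i).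
  { apply HW1; [|lia]. intros w Hw. simpl. rewrite Hy. unfold shiftn.
    rewrite (Hk (w + P)); [|lia]. unfold shiftn. f_equal. ring. }
  rewrite -e2 keyA. exact e1.
Qed.

Theorem theorem4p3 (A : finType) (u : seqZ A) (p : nat -> Z) :
  toeplitz u -> ~ periodic u -> period_structure u p ->
  (* the natural inclusions of the direct system *)
  ((forall f : subshift u -> subshift u, in_Aut f 1 -> in_Aut f (p O)) /\
   (forall (n : nat) (f : subshift u -> subshift u), in_Aut f (p n) -> in_Aut f (p (S n)))) /\
  (* Aut^(infty) is the union (direct limit) of the chain *)
  (forall f : subshift u -> subshift u,
     in_Aut_infty f <-> (in_Aut f 1 \/ exists n : nat, in_Aut f (p n))).
Proof.
  intros _ _ Hps.
  pose proof Hps as [Hd [Hcov Hess]].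
  assert (Hp : forall n, 1 <= p n) by (intro n; apply (Hess n)).
  split; [split|].
  - intros f [Hh Hc]. split; [exact Hh|].
    replace (p O) with (1 * p O) by ring. apply comm_mult. exact Hc.
  - intros n f [Hh Hc]. split; [exact Hh|].
    destruct (Hd n) as [c Hc2]. rewrite Hc2. replace (c * p n) with (p n * c) by ring.
    apply comm_mult. exact Hc.
  - intro f. split.
    + intros [m [Hm [[g Hg] Hc]]]. right.
      destruct (hard Hps Hm (proj1 (proj2 (proj2 Hg))) Hc) as [n Hn].
      exists n. split; [exists g; exact Hg| exact Hn].
    + intros [H|[n H]].
      * exists 1. split; [lia|exact H].
      * exists (p n). split; [apply Hp|exact H].
Qed.
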